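(* Consider the coordination game described in the context in which each agent $i$ observes only the signal $z_i=A-\theta+\rho_i$. Suppose $\rho_i\in[-\sigma,\sigma]$ almost surely (its density vanishes outside $[-\sigma,\sigma]$), where $0<\sigma<\tfrac12$. Then there exists a continuum (an uncountable family) of distinct equilibria $A(\cdot)$.
   Context: A unit mass of agents $i\in[0,1]$ each choose $a_i\in\{0,1\}$ ($a_i=1$: attack the status quo). The aggregate attack is $A=\int_0^1 a_i\,di$. The status quo has strength $\theta\in\mathbb{R}$ and is abandoned iff $A\ge\theta$. An attacking agent pays cost $c\in(0,1)$ and gets $1$ if the status quo is abandoned, otherwise nothing; not attacking yields $0$. Agents hold an (improper) uniform prior over $\theta$ on $\mathbb{R}$. Agent $i$ receives a single private signal $z_i=A-\theta+\rho_i$, where the errors $\rho_i$ are i.i.d. across agents with density $g$; the structure is common knowledge. Given a conjectured (measurable) aggregate attack function $A:\mathbb{R}\to[0,1]$, the posterior of an agent with signal $z$ is $P[\theta\in S\mid z,A(\cdot)]=\int_S g(z-A(\theta)+\theta)\,d\theta\big/\int_{\mathbb{R}} g(z-A(\theta)+\theta)\,d\theta$. An equilibrium is a function $A:\mathbb{R}\to[0,1]$ such that for all $\theta\in\mathbb{R}$, $A(\theta)=\int_{\mathbb{R}}\chi\{\rho: P[A(\theta')\ge\theta'\mid z=A(\theta)-\theta+\rho,\,A(\cdot)]\ge c\}\,g(\rho)\,d\rho$, where $\theta'$ is the random fundamental under the posterior and $\chi$ is the indicator function. *)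

(* Defs.v *)
From HB Require Import structures.
From mathcomp Require Import all_boot all_order all_algebra.
From mathcomp Require Import all_classical all_reals all_analysis.
Set Implicit Arguments. Unset Strict Implicit. Unset Printing Implicit Defensive.
Import Order.TTheory GRing.Theory Num.Theory.
Import numFieldNormedType.Exports.
Local Open Scope classical_set_scope.
Local Open Scope ring_scope.

(* Unnormalized posterior weight of theta given signal z under conjectured
   aggregate attack A: g (z - A theta + theta). *)
Definition post_weight {R : realType} (g : R -> R) (A : R -> R) (z : R) (th : R) : R :=
  g (z - A th + th).

(* Posterior probability P[theta in S | z, A(.)] under the improper uniform
   prior: ratio of Lebesgue integrals (real-valued via [fine]). *)
Definition posterior {R : realType} (g : R -> R) (A : R -> R) (z : R) (S : set R) : R :=
  fine (\int[@lebesgue_measure R]_(th in S) (post_weight g A z th)%:E)%E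
  / fine (\int[@lebesgue_measure R]_th (post_weight g A z th)%:E)%E.

Definition post_abandon {R : realType} (g : R -> R) (A : R -> R) (z : R) : R :=
  posterior g A z [set th | th <= A th].

Definition is_density {R : realType} (g : R -> R) : Prop :=
  measurable_fun setT g /\ (forall x, 0 <= g x) /\
  (\int[@lebesgue_measure R]_x (g x)%:E = 1)%E.

Definition equilibrium {R : realType} (c : R) (g : R -> R) (A : R -> R) : Prop :=
  measurable_fun setT A /\ (forall th, 0 <= A th <= 1) /\
  forall th,
    (A th)%:E =
    (\int[@lebesgue_measure R]_rho
       ((\1_[set r | c <= post_abandon g A (A th - th + r)] rho : R) * g rho)%:E)%E.

(* Main.v *)
Require Import Defs.
From HB Require Import structures.
From mathcomp Require Import all_boot all_order all_algebra.
From mathcomp Require Import all_classical all_reals all_analysis.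
From mathcomp Require Import measurable_realfun lra.
Import Order.TTheory GRing.Theory Num.Theory.
Local Open Scope classical_set_scope.
Local Open Scope ring_scope.

Section S.
Context {R : realType}.
Local Notation mu := (@lebesgue_measure R).

Lemma mshift (a : R) : measurable_fun setT (fun x : R => x + a).
Proof. by apply: measurable_funD => //; exact: measurable_cst. Qed.

Lemma lebesgue_shift (a : R) (A : set R) : measurable A ->
  pushforward mu ((fun x : R => x + a) : _ -> measurableTypeR R) A = mu A.
Proof.
move=> mA; apply/esym.
apply: (@lebesgue_measure_unique R (pushforward mu ((fun x : R => x + a) : _ -> measurableTypeR R))) => //.
  exact: mshift.
move=> mh _ [[x y]] _ <-.
rewrite /pushforward /=.
transitivity (mu `]x - a, y - a]%classic); last first.
  congr (mu _); apply/seteqP; split => u /=; rewrite !in_itv /=.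
    by rewrite ltrBlDr lerBrDr.
  by rewrite ltrBlDr lerBrDr.
rewrite !lebesgue_measure_itv /= !lte_fin ltrD2r.
by case: ifP => // _; rewrite -!EFinD; congr EFin; rewrite opprB addrC addrA subrK addrC.
Qed.

Local Open Scope ereal_scope.
Lemma integral_shift (a : R) (f : R -> \bar R) :
  measurable_fun setT f -> (forall x, 0 <= f x) ->
  \int[mu]_x f (x + a)%R = \int[mu]_x f x.
Proof.
move=> mf f0.
have := @ge0_integral_pushforward _ _ (measurableTypeR R) (measurableTypeR R) R ((fun x : R => (x + a)%R) : _ -> measurableTypeR R) (mshift a) mu setT f measurableT mf (fun y _ => f0 y).
rewrite preimage_setT => <-.
apply: eq_measure_integral.
  exact: mshift.
move=> ? A mA _.
have H := @lebesgue_shift a A mA. exact H.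
Qed.

Definition Gf (g : R -> R) (y : R) : \bar R :=
  \int[mu]_(u in `]-oo, y]%classic) (g u)%:E.

Lemma Gf_ge0 (g : R -> R) (y : R) : (forall x, (0 <= g x)%R) -> 0 <= Gf g y.
Proof. by move=> g0; apply: integral_ge0 => x _; rewrite lee_fin. Qed.

Lemma Gf_le (g : R -> R) (y1 y2 : R) : measurable_fun setT g -> (forall x, (0 <= g x)%R) ->
  (y1 <= y2)%R -> Gf g y1 <= Gf g y2.
Proof.
move=> mg g0 y12; apply: ge0_subset_integral => //.
- exact/measurable_EFinP/measurable_funTS.
- by move=> x _; rewrite lee_fin.
- by apply: subset_itvl; rewrite bnd_simp.
Qed.

Lemma Gf_le_int (g : R -> R) (y : R) : measurable_fun setT g -> (forall x, (0 <= g x)%R) ->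
  Gf g y <= \int[mu]_x (g x)%:E.
Proof.
move=> mg g0; apply: ge0_subset_integral => //.
- exact/measurable_EFinP.
- by move=> x _; rewrite lee_fin.
Qed.

Lemma null_left (g : R -> R) (W : set R) (b : R) :
  measurable_fun setT g -> (forall x, (0 <= g x)%R) ->
  measurable W ->
  (forall x y, (x <= y)%R -> W y -> W x) ->
  (forall y, W y -> (y <= b)%R) ->
  (forall y, W y -> Gf g y = 0) ->
  \int[mu]_(x in W) (g x)%:E = 0.
Proof.
move=> mg g0 mW Wdown Wb WG.
case: (pselect (exists w, W w)) => [[w0 Ww0]|nW]; last first.
  have -> : W = set0 by apply/seteqP; split => x // Wx; apply: nW; exists x.
  exact: integral_set0.
have hs : has_sup W by split; [exists w0 | exists b => y /Wb].
set s := sup W.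
have Ws : forall y, W y -> (y <= s)%R by move=> y Wy; exact: sup_upper_bound.
have Wlt : forall y, (y < s)%R -> W y.
  move=> y ys; have sy : (0 < s - y)%R by rewrite subr_gt0.
  have [e We se] := @sup_adherent _ W (s - y) sy hs.
  apply: (Wdown y e) => //; apply: ltW; move: se; rewrite -/s opprB addrC subrK.
  by [].
pose F (n : nat) : set R := `]-oo, (s - n.+1%:R^-1)%R]%classic.
have nndF : nondecreasing_seq F.
  move=> n m nm; rewrite subsetEset; apply: subset_itvl; rewrite bnd_simp.
  rewrite lerD2l lerN2 lef_pV2 ?posrE ?ltr0n // ler_nat; by [].
have mF : forall i, measurable (F i) by move=> i; exact: measurable_itv.
have mf : forall i, measurable_fun (F i) (fun x => (g x)%:E).
  by move=> i; apply/measurable_EFinP; exact: measurable_funTS.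
have f0 : forall i x, F i x -> 0 <= (g x)%:E by move=> i x _; rewrite lee_fin.
have cvgF := @ge0_nondecreasing_set_cvg_integral _ (measurableTypeR R) R F (fun x => (g x)%:E) mu nndF mF mf f0.
have F0 : (fun i => \int[mu]_(x in F i) (g x)%:E) = fun _ => 0.
  apply/funext => i; apply: WG; apply: Wlt.
  by rewrite ltrBlDr ltrDl invr_gt0 ltr0n.
rewrite F0 in cvgF.
have UF : \bigcup_i F i = `]-oo, s[%classic.
  apply/seteqP; split=> x /=.
    move=> [i _]; rewrite /F /= in_itv /= => xle; apply: (le_lt_trans xle).
    by rewrite ltrBlDr ltrDl invr_gt0 ltr0n.
  rewrite in_itv /= => xs; exists (Num.truncn ((s - x)^-1)) => //=.
  rewrite /F /= in_itv /= lerBrDr addrC -lerBrDr.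
  have h := truncnS_gt ((s - x)^-1)%R.
  rewrite -[X in (_ <= X)%R](invrK (s - x)%R); apply: ltW.
  by rewrite ltf_pV2 ?posrE ?ltr0n ?invr_gt0 ?subr_gt0.
rewrite UF in cvgF.
have I0 : \int[mu]_(x in `]-oo, s[%classic) (g x)%:E = 0.
  by apply/esym; apply: (cvg_unique _ (cvg_cst 0) cvgF).
apply/eqP; rewrite eq_le; apply/andP; split; last first.
  by apply: integral_ge0 => x _; rewrite lee_fin.
rewrite -I0.
have -> : \int[mu]_(x in `]-oo, s[%classic) (g x)%:E = \int[mu]_(x in `]-oo, s]%classic) (g x)%:E.
  apply: (@integral_itv_bndo_bndc R -oo%O s (fun x => (g x)%:E)).
  by apply/measurable_EFinP; exact: measurable_funTS.
apply: ge0_subset_integral => //.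
- by apply/measurable_EFinP; exact: measurable_funTS.
- by move=> x _; rewrite lee_fin.
Qed.
Local Close Scope ereal_scope.

Lemma memNyc (x k : R) : (x \in `]-oo, k]%classic) = (x <= k).
Proof. by apply/idP/idP => [/set_mem|h]; [rewrite /= in_itv /= | apply: mem_set; rewrite /= in_itv /=]. Qed.

Definition Ak (k : R) : R -> R := fun th => if th <= k then 1 else 0.

Lemma Ak_meas k : measurable_fun setT (Ak k).
Proof.
have -> : Ak k = \1_(`]-oo, k]%classic) :> (R -> R).
  by apply/funext => x; rewrite indicE /Ak memNyc; case: ifP.
exact: measurable_indic.
Qed.

Lemma g_hi {g : R -> R} {sigma x : R} : (forall y, sigma < `|y| -> g y = 0) ->
  sigma < x -> g x = 0.
Proof. by move=> gs sx; apply: gs; apply: (lt_le_trans sx); exact: ler_norm. Qed.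

Lemma g_lo {g : R -> R} {sigma x : R} : (forall y, sigma < `|y| -> g y = 0) ->
  x < - sigma -> g x = 0.
Proof.
move=> gs sx; apply: gs; rewrite -normrN; apply: (lt_le_trans _ (ler_norm _)).
by rewrite ltrNr.
Qed.

Lemma g_supp {g : R -> R} {sigma x : R} : (forall y, sigma < `|y| -> g y = 0) ->
  g x != 0 -> - sigma <= x <= sigma.
Proof.
move=> gs gx; rewrite -ler_norml leNgt; apply/negP => h.
by move: gx; rewrite gs ?eqxx.
Qed.

Lemma post_eq (g : R -> R) sigma k th rho :
  measurable_fun setT g -> (forall x, 0 <= g x) ->
  (forall y, sigma < `|y| -> g y = 0) ->
  0 < sigma < 1 / 2 -> 0 <= k <= 1 -> th <= k -> - sigma <= rho <= sigma ->
  post_abandon g (Ak k) (1 - th + rho) =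
  fine (Gf g (rho + (k - th))) / fine (Gf g (rho + (k - th))).
Proof.
move=> mg g0 gs /andP[s0 s2] /andP[k0 k1] thk /andP[rl rh].
rewrite /post_abandon /posterior.
have E1 : (\int[mu]_(x in [set th0 : R | (th0 <= Ak k th0)%R]) (post_weight g (Ak k) (1 - th + rho) x)%:E
   = \int[mu]_x (post_weight g (Ak k) (1 - th + rho) x)%:E)%E.
  rewrite integral_mkcond; apply: eq_integral => x _; rewrite patchE.
  case: ifPn => // xS; rewrite notin_setE /= in xS.
  rewrite /post_weight /Ak; case: ifPn => xk.
    by exfalso; apply: xS; rewrite /Ak xk; apply: (le_trans xk k1).
  rewrite (g_hi gs) //; rewrite -ltNge in xk; lra.
have E2 : (\int[mu]_x (post_weight g (Ak k) (1 - th + rho) x)%:E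
   = Gf g (rho + (k - th)))%E.
  pose h u := ((\1_(`]-oo, rho + (k - th)]%classic) u : R) * g u)%:E.
  have mh : measurable_fun setT h.
    apply/measurable_EFinP; apply: measurable_funM => //.
  have h0 : forall u, (0 <= h u)%E.
    move=> u; rewrite /h lee_fin; apply: mulr_ge0 => //.
  transitivity (\int[mu]_x h (x + (rho - th))%R)%E.
    apply: eq_integral => x _; rewrite /post_weight /Ak /h indicE memNyc.
    have -> : (x + (rho - th) <= rho + (k - th)) = (x <= k).
      by apply/idP/idP => H; lra.
    case: ifPn => xk; first by rewrite mul1r; congr (EFin (g _)); lra.
    rewrite mul0r (g_hi gs) //; rewrite -ltNge in xk; lra.
  rewrite integral_shift //.
  rewrite /Gf [RHS]integral_mkcond; apply: eq_integral => u _; rewrite patchE /h indicE.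
  by case: ifPn => _; rewrite ?mul1r ?mul0r.
by rewrite E1 E2.
Qed.


Lemma Gf_top (g : R -> R) sigma y :
  (forall y, sigma < `|y| -> g y = 0) ->
  (\int[mu]_x (g x)%:E = 1)%E -> sigma <= y -> Gf g y = 1%E.
Proof.
move=> gs g1 sy; rewrite /Gf [LHS]integral_mkcond -g1; apply: eq_integral => x _.
rewrite patchE; case: ifPn => // xn; rewrite memNyc -ltNge in xn.
by rewrite (g_hi gs) //; apply: (le_lt_trans sy).
Qed.

Lemma Gf_fin (g : R -> R) y : measurable_fun setT g -> (forall x, 0 <= g x) ->
  (\int[mu]_x (g x)%:E = 1)%E -> (0 <= Gf g y /\ Gf g y <= 1)%E.
Proof.
move=> mg g0 g1; split; first exact: Gf_ge0.
by rewrite -g1; exact: Gf_le_int.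
Qed.

Lemma step_equilibrium (c sigma : R) (g : R -> R) k :
  0 < c < 1 -> 0 < sigma < 1 / 2 -> is_density g ->
  (forall x, sigma < `|x| -> g x = 0) -> 0 <= k <= 1 ->
  equilibrium c g (Ak k).
Proof.
move=> /andP[c0 c1] hs [mg [g0 g1]] gs /andP[k0 k1].
have /andP[s0 s2] := hs.
split; first exact: Ak_meas.
split; first by move=> th; rewrite /Ak; case: ifP => _; rewrite ?lexx ?ler01.
move=> th.
have [thk|kth] := leP th k; last first.
  have -> : Ak k th = 0 by rewrite /Ak leNgt kth.
  transitivity (\int[mu]_rho (cst 0%E rho))%E; first by rewrite integral0.
  apply: eq_integral => rho _.
  have [->|gn0] := eqVneq (g rho) 0; first by rewrite mulr0.
  have /andP[rl rh] := g_supp gs gn0.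
  rewrite indicE memNset ?mul0r //= => hc.
  suff : post_abandon g (Ak k) (0 - th + rho) = 0.
    by move=> h0; move: hc; rewrite h0 leNgt c0.
  rewrite /post_abandon /posterior.
  have -> : (\int[mu]_(x in [set th0 : R | (th0 <= Ak k th0)%R]) (post_weight g (Ak k) (0 - th + rho) x)%:E = 0)%E.
    transitivity (\int[mu]_(x in [set th0 : R | (th0 <= Ak k th0)%R]) (cst 0%E x))%E; last by rewrite integral0.
    apply: eq_integral => x /set_mem /=; rewrite /post_weight /Ak.
    case: ifPn => xk hx.
      by rewrite (g_lo gs) //; lra.
    by exfalso; rewrite -ltNge in xk; lra.
  by rewrite /= mul0r.
have -> : Ak k th = 1 by rewrite /Ak thk.
set d := k - th.
pose W := [set rho : R | Gf g (rho + d) = 0%E].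
have d0 : 0 <= d by rewrite subr_ge0.
have Wdown : forall x y, x <= y -> W y -> W x.
  move=> x y xy; rewrite /W /= => Wy; apply/eqP; rewrite eq_le Gf_ge0 // andbT -Wy.
  by apply: Gf_le => //; rewrite lerD2r.
have mW : measurable W.
  apply: is_interval_measurable => x y _ Wy z /andP[_ zy]; exact: (Wdown z y).
have Wb : forall y, W y -> y <= sigma.
  move=> y; rewrite /W /= => Wy; rewrite leNgt; apply/negP => sy.
  have h1 : sigma <= y + d by apply: ltW; apply: (lt_le_trans sy); rewrite lerDl.
  have := @Gf_le g sigma (y + d) mg g0 h1.
  by rewrite (@Gf_top g sigma sigma gs g1 (lexx sigma)) Wy lee_fin ler10.
have WG : forall y, W y -> Gf g y = 0%E.
  move=> y Wy; apply/eqP; rewrite eq_le Gf_ge0 // andbT; rewrite -Wy.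
  by apply: Gf_le => //; rewrite lerDl.
have IW := @null_left g W sigma mg g0 mW Wdown Wb WG.
have mQ : measurable (~` W) by exact: measurableC.
transitivity (\int[mu]_(x in ~` W) (g x)%:E)%E.
  have := @ge0_integral_setU _ (measurableTypeR R) R mu (~` W) W mQ mW (fun x => (g x)%:E).
  rewrite setvU IW adde0 g1 => -> //.
  - by apply/measurable_EFinP.
  - by move=> x _; rewrite lee_fin.
  - by rewrite disj_set2E setICl.
rewrite [LHS]integral_mkcond; apply: eq_integral => rho _; rewrite patchE.
have [->|gn0] := eqVneq (g rho) 0; first by rewrite mulr0; case: ifP.
have /andP[rl rh] := g_supp gs gn0.
have hA : 1 - th + rho = Ak k th - th + rho by rewrite /Ak thk.
have pe := @post_eq g sigma k th rho mg g0 gs hs (introT andP (conj k0 k1)) thk (introT andP (conj rl rh)).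
have [Gf0 Gf1] := @Gf_fin g (rho + d) mg g0 g1.
case: ifPn => hQ.
  rewrite indicE mem_set ?mul1r //= pe.
  move: hQ; rewrite inE /= /W /= => hQ.
  have fpos : 0 < fine (Gf g (rho + d)).
    rewrite lt_neqAle fine_ge0 // andbT eq_sym; apply/negP => /eqP f0.
    apply: hQ; rewrite -[Gf _ _]fineK ?f0 //.
    by rewrite fin_numE; apply/andP; split; [rewrite gt_eqF // (lt_le_trans _ Gf0) ?ltNy0 | rewrite lt_eqF // (le_lt_trans Gf1) ?ltry].
  by rewrite divff ?gt_eqF // ltW.
rewrite indicE memNset ?mul0r //= pe.
move: hQ; rewrite notin_setE /= /W /= => /contrapT ->.
by rewrite /= mul0r leNgt c0.
Qed.

End S.

Lemma Ak_inj (R : realType) (k1 k2 : R) : Ak k1 = Ak k2 -> k1 = k2.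
Proof.
move=> E; apply/eqP; rewrite eq_le; apply/andP; split; rewrite leNgt; apply/negP => h.
- have := congr1 (fun f => f k1) E; rewrite /Ak lexx leNgt h /=.
  by move/eqP; rewrite oner_eq0.
- have := congr1 (fun f => f k2) E; rewrite /Ak lexx leNgt h /=.
  by move/eqP; rewrite eq_sym oner_eq0.
Qed.

Theorem proposition3 (R : realType) (c sigma : R) (g : R -> R) :
  0 < c < 1 ->
  0 < sigma < 1 / 2 ->
  is_density g ->
  (forall x, sigma < `|x| -> g x = 0) ->
  exists F : R -> (R -> R), injective F /\ forall t, equilibrium c g (F t).
Proof.
move=> hc hs hg gs.
exists (fun t => Ak (1 + expR t)^-1); split.
  move=> a b /= /Ak_inj /invr_inj /addrI; exact: expR_inj.
move=> t; apply: (@step_equilibrium R c sigma g _ hc hs hg gs).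
have hp : 0 < 1 + expR t :> R by rewrite addr_gt0 ?expR_gt0.
by rewrite invr_ge0 (ltW hp) /= invf_le1 // lerDl expR_ge0.
Qed.
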